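(* Let $a<b$, $n\ge1$, and let $I_n: a=x_0<x_1<\cdots<x_n=b$ be the uniform partition with $x_{i+1}-x_i=h=\frac{b-a}{n}$ for $i=0,\dots,n-1$. Let $f:[a,b]\rightarrow\mathbb{R}$ be a twice continuously differentiable mapping in $(a,b)$ with $f''\in L^2[a,b]$. Define \[ S(f,I_n)=\frac{h}{2}\sum_{i=0}^{n-1}\left[f\left(\frac{3x_i+x_{i+1}}{4}\right)+f\left(\frac{x_i+3x_{i+1}}{4}\right)\right] \] and $R(f,I_n)=\int_a^b f(x)\,dx-S(f,I_n)$. Then \[ |R(f,I_n)|\leq \frac{(b-a)^{5/2}}{4\sqrt{3}\pi n^2}\|f''\|_2. \]
   Context: $\|g\|_2=\left(\int_a^b g(t)^2\,dt\right)^{1/2}$. *)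

(* Defs.v *)
From HB Require Import structures.
From mathcomp Require Import all_boot all_order all_algebra.
From mathcomp Require Import all_classical all_reals all_analysis.
Set Implicit Arguments. Unset Strict Implicit. Unset Printing Implicit Defensive.
Import Order.TTheory GRing.Theory Num.Theory.
Import numFieldNormedType.Exports.
Local Open Scope classical_set_scope.
Local Open Scope ring_scope.

Definition node (R : realType) (a b : R) (n i : nat) : R :=
  a + i%:R * ((b - a) / n%:R).

Definition quadS (R : realType) (f : R -> R) (a b : R) (n : nat) : R :=
  ((b - a) / n%:R) / 2 *
  \sum_(i < n) (f ((3 * node a b n i + node a b n i.+1) / 4)
              + f ((node a b n i + 3 * node a b n i.+1) / 4)).

Definition quadR (R : realType) (f : R -> R) (a b : R) (n : nat) : R :=
  Rintegral lebesgue_measure `[a, b] f - quadS f a b n.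

Definition L2norm (R : realType) (g : R -> R) (a b : R) : R :=
  Num.sqrt (Rintegral lebesgue_measure `[a, b] (fun t => g t ^+ 2)).

(* Main.v *)
Require Import Defs.
From HB Require Import structures.
From mathcomp Require Import all_boot all_order all_algebra.
From mathcomp Require Import all_classical all_reals all_analysis.
From mathcomp Require Import measurable_realfun.
From mathcomp Require Import lra ring.
Import Order.TTheory GRing.Theory Num.Theory.
Import numFieldNormedType.Exports.
Local Open Scope classical_set_scope.
Local Open Scope ring_scope.

Section P.
Variable R : realType.
Notation mu := (@lebesgue_measure R).

Lemma cc_int (g : R -> R) u v : continuous g -> mu.-integrable `[u, v] (EFin \o g).
Proof.
move=> cg; apply: continuous_compact_integrable; first exact: segment_compact.
exact: continuous_subspaceT.
Qed.

Lemma ftc_cl (F G : R -> R) u v : u < v ->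
  (forall x, u <= x <= v -> derivable F x 1) ->
  {within `[u, v], continuous G} ->
  (forall x, u < x < v -> derive1 F x = G x) ->
  Rintegral mu `[u, v] G = F v - F u.
Proof.
move=> uv dF cG FG.
have cF y : u <= y <= v -> {for y, continuous F}.
  by move=> /dF /derivable1_diffP /differentiable_continuous.
have h := @continuous_FTC2 R G F u v uv cG.
rewrite /Rintegral h //.
split.
- by move=> x; rewrite in_itv /= => /andP[ux xv]; apply: dF; rewrite !ltW.
- by apply: cvg_at_right_filter; apply: cF; rewrite lexx ltW.
- by apply: cvg_at_left_filter; apply: cF; rewrite lexx ltW.
Qed.

Lemma bnd_aux (y p q B : R) : `|y - p - q| <= B -> `|y| <= `|p| + `|q| + B.
Proof.
move=> h; have h1 := ler_normD (y - p - q) (p + q); have h2 := ler_normD p q.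
have e : y = y - p - q + (p + q) by ring.
rewrite {1}e; lra.
Qed.

Lemma dF (s t x : R) : is_derive x 1 (fun y : R => s * (y * y) / 2 + t * y) (s * x + t).
Proof.
apply: is_derive_eq.
by rewrite /GRing.scale /= !mulr0 add0r !mulr1; field.
Qed.

Lemma cont_lin (s t : R) : continuous (fun x : R => s * x + t).
Proof.
move=> x; apply: continuousD; last exact: cvg_cst.
by apply: continuousM; [exact: cvg_cst|exact: cvg_id].
Qed.

Lemma LING (s t u v : R) : u < v ->
  Rintegral mu `]u, v[ (fun x => s * x + t) = s * (v * v - u * u) / 2 + t * (v - u).
Proof.
move=> uv.
have iuv := cc_int _ u v (cont_lin s t).
rewrite Rintegral_itv_bndo_bndc; last first.
  by apply: integrableS iuv => //; apply: subset_itv; rewrite bnd_simp.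
rewrite Rintegral_itv_obnd_cbnd; last first.
  by apply: integrableS iuv => //; apply: subset_itv; rewrite bnd_simp.
rewrite (@ftc_cl (fun y : R => s * (y * y) / 2 + t * y) (fun x => s * x + t) u v uv).
- by rewrite /=; field.
- by move=> x _; apply: ex_derive; exact: dF.
- exact: continuous_subspaceT (cont_lin s t).
- by move=> x _; rewrite derive1E; apply: derive_val; exact: dF.
Qed.

Lemma cst_int (c u v : R) : u < v ->
  Rintegral mu `[u, v] (fun _ => c) = c * (v - u).
Proof.
move=> uv.
have iuv := cc_int (fun _ => c) u v (fun x => @cst_continuous _ _ c x).
rewrite -Rintegral_itv_obnd_cbnd; last first.
  by apply: integrableS iuv => //; apply: subset_itv; rewrite bnd_simp.
rewrite -Rintegral_itv_bndo_bndc; last first.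
  by apply: integrableS iuv => //; apply: subset_itv; rewrite bnd_simp.
transitivity (Rintegral mu `]u, v[ (fun x => 0 * x + c)).
  by apply: eq_Rintegral => x _; rewrite mul0r add0r.
by rewrite LING //; ring.
Qed.
End P.

Section S.
Variable R : realType.
Notation mu := (@lebesgue_measure R).
Variables (a b : R) (f : R -> R).
Hypothesis hab : a < b.
Hypothesis df : forall x, a < x < b -> derivable f x 1.
Hypothesis ddf : forall x, a < x < b -> derivable (derive1 f) x 1.
Hypothesis cf2 : forall x, a < x < b -> {for x, continuous (derive1n 2 f)}.
Hypothesis if2 : mu.-integrable `[a, b] (fun x => ((derive1n 2 f) x ^+ 2)%:E).
Ltac lra' := have := hab; lra.

Local Notation f1 := (derive1 f).
Local Notation f2 := (derive1 (derive1 f)).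

Lemma cont_f x : a < x < b -> {for x, continuous f}.
Proof. by move=> /df /derivable1_diffP /differentiable_continuous. Qed.

Lemma cont_f1 x : a < x < b -> {for x, continuous f1}.
Proof. by move=> /ddf /derivable1_diffP /differentiable_continuous. Qed.

Lemma meas_oo (g : R -> R) : (forall x, a < x < b -> {for x, continuous g}) ->
  measurable_fun `[a, b] g.
Proof.
move=> cg; apply: (@measurable_fun_itv_cc _ _ _ false true).
apply: open_continuous_measurable_fun; first exact: interval_open.
by move=> x; rewrite inE /= in_itv /= => /cg.
Qed.

Lemma meas_f2 : measurable_fun `[a, b] f2.
Proof. exact: meas_oo cf2. Qed.


Lemma int_absf2 : mu.-integrable `[a, b] (EFin \o (fun x => `|f2 x|)).
Proof.
apply: (@le_integrable _ _ _ mu _ _ _ (EFin \o (fun x => 1 + f2 x ^+ 2))).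
- exact: measurable_itv.
- by apply/measurable_EFinP; apply: measurableT_comp => //; exact: meas_f2.
- move=> x _ /=; rewrite !normr_id lee_fin [X in _ <= X]ger0_norm ?addr_ge0 ?sqr_ge0//.
  rewrite -real_normK ?num_real//; have := normr_ge0 (f2 x); set t := `|f2 x|.
  by move=> ?; nra.
- have h := @integrableD _ _ _ mu `[a, b] (measurable_itv _) _ _
    (@cc_int R (cst 1) a b (fun x => @cst_continuous _ _ (1:R) x)) if2.
  by apply: eq_integrable h => //; exact: measurable_itv.
Qed.

Definition Phi u v := Rintegral mu `[u, v] (fun x => `|f2 x|).

Lemma Phi_ge0 u v : 0 <= Phi u v.
Proof. by apply: Rintegral_ge0 => x _. Qed.

Lemma int_sub {g : R -> R} {D : set R} : measurable D -> D `<=` `[a, b] ->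
  mu.-integrable `[a, b] (EFin \o g) -> mu.-integrable D (EFin \o g).
Proof. by move=> mD Dab; apply: integrableS => //; exact: measurable_itv. Qed.

Lemma sub_ab {u v : R} : a <= u -> v <= b -> `[u, v] `<=` `[a, b].
Proof.
move=> au vb x /=; rewrite !in_itv /= => /andP[ux xv].
by rewrite (le_trans au ux) (le_trans xv vb).
Qed.

Lemma Phi_mono u v s t : a <= u -> u <= s -> t <= v -> v <= b ->
  Phi s t <= Phi u v.
Proof.
move=> au us tv vb; rewrite /Phi /Rintegral.
have iuv := int_sub (measurable_itv _) (sub_ab au vb) int_absf2.
have sst : `[s, t] `<=` `[u, v].
  move=> x /=; rewrite !in_itv /= => /andP[sx xt].
  by rewrite (le_trans us sx) (le_trans xt tv).
have ist := int_sub (measurable_itv _) (subset_trans sst (sub_ab au vb)) int_absf2.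
apply: fine_le; [exact: integrable_fin_num|exact: integrable_fin_num|].
apply: ge0_subset_integral => //; try exact: measurable_itv.
by case/integrableP: iuv.
Qed.

Lemma Phi_add u v w : a <= u -> u <= v -> v <= w -> w <= b ->
  Phi u w = Phi u v + Phi v w.
Proof.
move=> au uv vw wb; rewrite /Phi.
have iuw := int_sub (measurable_itv _) (sub_ab au wb) int_absf2.
have := @Rintegral_itvB R (fun x => `|f2 x|) (BLeft u) (BRight w) v iuw.
rewrite !bnd_simp => /(_ uv vw) => h.
rewrite -[X in _ = _ + X]Rintegral_itv_obnd_cbnd; last first.
  apply: integrableS iuw => //; try exact: measurable_itv.
  by apply: subset_itvr; rewrite bnd_simp.
by rewrite -h addrC subrK.
Qed.


Lemma in_ab_cont (g : R -> R) s t : a < s -> t < b ->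
  (forall x, a < x < b -> {for x, continuous g}) ->
  {within `[s, t], continuous g}.
Proof.
move=> hs tb cg; apply: continuous_in_subspaceT => x.
rewrite inE /= in_itv /= => /andP[sx xt]; apply: cg.
by rewrite (lt_le_trans hs sx) (le_lt_trans xt tb).
Qed.

Lemma f1_diff s t : a < s -> s <= t -> t < b -> `|f1 t - f1 s| <= Phi s t.
Proof.
move=> hs st tb; case: (eqVneq s t) => [<-|nst].
  by rewrite subrr normr0 Phi_ge0.
have {nst}st' : s < t by rewrite lt_neqAle nst st.
rewrite -(@ftc_cl R f1 f2 s t st').
- apply: le_normr_Rintegral; first exact: measurable_itv.
  apply: continuous_compact_integrable; first exact: segment_compact.
  exact: in_ab_cont.
- move=> x /andP[sx xt]; apply: ddf.
  by rewrite (lt_le_trans hs sx) (le_lt_trans xt tb).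
- exact: in_ab_cont.
- by [].
Qed.

Lemma PW {u v : R} : a < u -> u <= v -> v < b ->
  `|f v - f u - f1 u * (v - u)| <= (v - u) * Phi u v /\
  `|f u - f v - f1 v * (u - v)| <= (v - u) * Phi u v.
Proof.
move=> au uv vb; case: (eqVneq u v) => [<-|nuv].
  by rewrite !subrr mulr0 !subrr normr0 mul0r lexx.
have {nuv}uv' : u < v by rewrite lt_neqAle nuv uv.
have H1 : forall x, x \in `]u, v[ -> is_derive x 1 f (f1 x).
  move=> x; rewrite in_itv /= => /andP[ux xv].
  rewrite derive1E; apply: derivableP; apply: df.
  by rewrite (lt_trans au ux) (lt_trans xv vb).
have H2 : {within `[u, v], continuous f}.
  by apply: in_ab_cont => //; exact: cont_f.
have [c] := @MVT R f f1 u v uv' H1 H2.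
rewrite in_itv /= => /andP[uc cv] hc.
have vu0 : 0 <= v - u by rewrite subr_ge0.
split.
- rewrite hc -mulrBl normrM (ger0_norm vu0) mulrC ler_wpM2l //.
  apply: (le_trans (f1_diff _ _ au (ltW uc) (lt_trans cv vb))).
  by apply: Phi_mono; rewrite ?lexx ?(ltW cv) ?(ltW au) ?(ltW vb).
- have -> : f u - f v - f1 v * (u - v) = (f1 v - f1 c) * (v - u).
    by rewrite -[f u - f v]opprB hc; ring.
  rewrite normrM (ger0_norm vu0) mulrC ler_wpM2l //.
  apply: (le_trans (f1_diff _ _ (lt_trans au uc) (ltW cv) vb)).
  by apply: Phi_mono; rewrite ?lexx ?(ltW uc) ?(ltW au) ?(ltW vb).
Qed.

Definition gm m x := f x - f m - f1 m * (x - m).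

Lemma TR {m x d : R} : a < m -> m <= x -> x < b -> x <= d -> d <= b ->
  `|gm m x| <= (x - m) * Phi m d.
Proof.
move=> am mx xb xd db; have [h _] := PW am mx xb.
apply: (le_trans h); apply: ler_wpM2l; first by rewrite subr_ge0.
by apply: Phi_mono; rewrite ?lexx ?(ltW am).
Qed.

Lemma TL {m x c : R} : a < x -> x <= m -> m < b -> a <= c -> c <= x ->
  `|gm m x| <= (m - x) * Phi c m.
Proof.
move=> ax xm mb ac cx; have [_ h] := PW ax xm mb.
apply: (le_trans h); apply: ler_wpM2l; first by rewrite subr_ge0.
by apply: Phi_mono; rewrite ?lexx ?(ltW mb).
Qed.


Lemma meas_f : measurable_fun `[a, b] f.
Proof. exact: meas_oo cont_f. Qed.

Lemma int_f : mu.-integrable `[a, b] (EFin \o f).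
Proof.
pose m := (a + b) / 2.
have am : a < m by rewrite /m; lra'.
have mb : m < b by rewrite /m; lra'.
pose M := `|f m| + `|f1 m| * (b - a) + (b - a) * Phi a b + `|f a| + `|f b|.
have hM x : x \in `[a, b] -> `|f x| <= M.
  rewrite in_itv /= => /andP[ax xb].
  have P0 := Phi_ge0 a b.
  have Na := normr_ge0 (f a); have Nb := normr_ge0 (f b).
  have N1 := normr_ge0 (f1 m); have Nm := normr_ge0 (f m).
  have Q1 : 0 <= `|f1 m| * (b - a) by rewrite mulr_ge0 // subr_ge0 ltW.
  have Q2 : 0 <= (b - a) * Phi a b by rewrite mulr_ge0 // subr_ge0 ltW.
  case: (eqVneq x a) => [->|nxa]; first by rewrite /M; lra'.
  case: (eqVneq x b) => [->|nxb]; first by rewrite /M; lra'.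
  have ax' : a < x by rewrite lt_neqAle eq_sym nxa ax.
  have xb' : x < b by rewrite lt_neqAle nxb xb.
  have hxm : `|x - m| <= b - a by rewrite ler_norml; apply/andP; split; lra'.
  have hq : `|f1 m * (x - m)| <= `|f1 m| * (b - a).
    by rewrite normrM ler_wpM2l.
  have hg : `|gm m x| <= (b - a) * Phi a b.
    case: (lerP m x) => mx.
    - apply: (le_trans (TR am mx xb' (ltW xb') (lexx b))).
      apply: ler_pM; rewrite ?subr_ge0 ?Phi_ge0 //; first lra'.
      by apply: Phi_mono; rewrite ?lexx ?(ltW am) ?(ltW hab).
    - apply: (le_trans (TL ax' (ltW mx) mb (lexx a) (ltW ax'))).
      apply: ler_pM; rewrite ?subr_ge0 ?Phi_ge0 ?(ltW mx) //; first lra'.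
      by apply: Phi_mono; rewrite ?lexx ?(ltW mb) ?(ltW hab).
  have := @bnd_aux R (f x) (f m) (f1 m * (x - m)) _ hg; rewrite /M; lra'.
apply: (@measurable_bounded_integrable _ _ _ mu).
- exact: measurable_itv.
  have h := @compact_finite_measure R _ (@segment_compact R a b). exact: h.
- exact: meas_f.
- rewrite /bounded_near; near=> M' => x /= Ax.
  apply: (le_trans (hM x Ax)); near: M'; apply: nbhs_pinfty_ge; exact: num_real.
Unshelve. all: end_near.
Qed.

Lemma int_cont {g : R -> R} {D : set R} : measurable D -> D `<=` `[a, b] ->
  continuous g -> mu.-integrable D (EFin \o g).
Proof. by move=> mD Dab cg; apply: int_sub => //; exact: cc_int. Qed.

Lemma int_fD {D : set R} : measurable D -> D `<=` `[a, b] ->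
  mu.-integrable D (EFin \o f).
Proof. by move=> mD Dab; apply: int_sub => //; exact: int_f. Qed.

Lemma int_gm m {D : set R} : measurable D -> D `<=` `[a, b] ->
  mu.-integrable D (EFin \o gm m).
Proof.
move=> mD Dab.
have h := @integrableB _ _ _ mu D mD _ _ (int_fD mD Dab)
  (int_cont mD Dab (@cont_lin R (f1 m) (f m - f1 m * m))).
apply: eq_integrable h => // x _ /=; rewrite /gm; congr (_%:E); ring.
Qed.

Lemma oo_sub {c d : R} : a <= c -> d <= b -> `]c, d[ `<=` `[a, b].
Proof.
move=> ac db x /=; rewrite !in_itv /= => /andP[cx xd].
by rewrite (le_trans ac (ltW cx)) (le_trans (ltW xd) db).
Qed.

Lemma HR m d : a < m -> m < d -> d <= b ->
  `|Rintegral mu `]m, d[ (gm m)| <= Phi m d * ((d - m) ^+ 2 / 2).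
Proof.
move=> am md db.
have sub := oo_sub (ltW am) db.
have mD : measurable `]m, d[ by exact: measurable_itv.
apply: (le_trans (@le_normr_Rintegral _ _ _ mu _ _ mD (int_gm m mD sub))).
have -> : (d - m) ^+ 2 / 2 = Rintegral mu `]m, d[ (fun x => 1 * x + - m).
  by rewrite LING //; field.
rewrite -RintegralZl //; last exact: int_cont mD sub (@cont_lin R _ _).
apply: le_Rintegral => //.
- have h := integrable_abse (int_gm m mD sub).
  by apply: eq_integrable h.
- apply: eq_integrable (int_cont mD sub (@cont_lin R (Phi m d) (- (Phi m d * m)))) => // x _ /=.
  by congr (_%:E); ring.
- move=> x; rewrite /= in_itv /= => /andP[mx xd].
  rewrite mul1r mulrC; apply: TR; rewrite ?(ltW mx) ?(ltW xd) //.
  exact: lt_le_trans xd db.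
Qed.

Lemma HL c m : a <= c -> c < m -> m < b ->
  `|Rintegral mu `]c, m[ (gm m)| <= Phi c m * ((m - c) ^+ 2 / 2).
Proof.
move=> ac cm mb.
have sub := oo_sub ac (ltW mb).
have mD : measurable `]c, m[ by exact: measurable_itv.
apply: (le_trans (@le_normr_Rintegral _ _ _ mu _ _ mD (int_gm m mD sub))).
have -> : (m - c) ^+ 2 / 2 = Rintegral mu `]c, m[ (fun x => (-1) * x + m).
  by rewrite LING //; field.
rewrite -RintegralZl //; last exact: int_cont mD sub (@cont_lin R _ _).
apply: le_Rintegral => //.
- have h := integrable_abse (int_gm m mD sub).
  by apply: eq_integrable h.
- apply: eq_integrable (int_cont mD sub (@cont_lin R (- Phi c m) (Phi c m * m))) => // x _ /=.
  by congr (_%:E); ring.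
- move=> x; rewrite /= in_itv /= => /andP[cx xm].
  rewrite mulN1r addrC mulrC; apply: TL; rewrite ?(ltW cx) ?(ltW xm) //.
  exact: le_lt_trans ac cx.
Qed.

Lemma MP c d : a <= c -> c < d -> d <= b ->
  `|Rintegral mu `]c, d[ f - (d - c) * f ((c + d) / 2)| <=
    (d - c) ^+ 2 / 8 * Phi c d.
Proof.
move=> ac cd db; set m := (c + d) / 2.
have cm : c < m by rewrite /m; lra.
have md : m < d by rewrite /m; lra.
have am : a < m by exact: le_lt_trans ac cm.
have mb : m < b by exact: lt_le_trans md db.
have sub := oo_sub ac db.
have mD : measurable `]c, d[ by exact: measurable_itv.
have -> : Rintegral mu `]c, d[ f = Rintegral mu `]c, d[ (fun x => gm m x + (f1 m * x + (f m - f1 m * m))).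
  by apply: eq_Rintegral => x _; rewrite /gm; ring.
rewrite RintegralD //; [|exact: int_gm|exact: int_cont (@cont_lin R _ _)].
rewrite LING //.
have := @Rintegral_itvB R (gm m) (BRight c) (BLeft d) m (int_gm m mD sub).
rewrite !bnd_simp => /(_ (ltW cm) md) => h.
have e : Rintegral mu `]c, d[ (gm m) =
    Rintegral mu `]c, m[ (gm m) + Rintegral mu `]m, d[ (gm m).
  rewrite [X in _ = X + _]Rintegral_itv_bndo_bndc; last first.
    apply: int_gm; first exact: measurable_itv.
    exact: oo_sub ac (ltW mb).
  by rewrite -h addrC subrK.
rewrite e.
have h1 := HL _ _ ac cm mb.
have h2 := HR _ _ am md db.
have hP := Phi_add _ _ _ ac (ltW cm) (ltW md) db.
have -> : (d - c) ^+ 2 / 8 * Phi c d = Phi c m * ((m - c) ^+ 2 / 2) + Phi m d * ((d - m) ^+ 2 / 2).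
  by rewrite hP /m; field.
have -> : Rintegral mu `]c, m[ (gm m) + Rintegral mu `]m, d[ (gm m) +
    (f1 m * (d * d - c * c) / 2 + (f m - f1 m * m) * (d - c)) - (d - c) * f m =
    Rintegral mu `]c, m[ (gm m) + Rintegral mu `]m, d[ (gm m).
  by rewrite /m; field.
apply: (le_trans (ler_normD _ _)).
exact: lerD.
Qed.

Lemma PC c d : a <= c -> c < d -> d <= b ->
  `|Rintegral mu `]c, d[ f -
     (d - c) / 2 * (f ((3 * c + d) / 4) + f ((c + 3 * d) / 4))| <=
    ((d - c) / 2) ^+ 2 / 8 * Phi c d.
Proof.
move=> ac cd db; set e := (c + d) / 2.
have ce : c < e by rewrite /e; lra.
have ed : e < d by rewrite /e; lra.
have ae : a <= e by apply: (le_trans ac); exact: ltW.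
have eb : e <= b by apply: (le_trans _ db); exact: ltW.
have mD : measurable `]c, d[ by exact: measurable_itv.
have := @Rintegral_itvB R f (BRight c) (BLeft d) e (int_fD mD (oo_sub ac db)).
rewrite !bnd_simp => /(_ (ltW ce) ed) => h.
have -> : Rintegral mu `]c, d[ f =
    Rintegral mu `]c, e[ f + Rintegral mu `]e, d[ f.
  rewrite [X in _ = X + _]Rintegral_itv_bndo_bndc; last first.
    apply: int_fD; first exact: measurable_itv.
    exact: oo_sub ac eb.
  by rewrite -h addrC subrK.
have h1 := MP _ _ ac ce eb.
have h2 := MP _ _ ae ed db.
have E1 : (c + e) / 2 = (3 * c + d) / 4 by rewrite /e; field.
have E2 : (e + d) / 2 = (c + 3 * d) / 4 by rewrite /e; field.
rewrite E1 in h1; rewrite E2 in h2.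
have hP := Phi_add _ _ _ ac (ltW ce) (ltW ed) db.
have -> : ((d - c) / 2) ^+ 2 / 8 * Phi c d =
  (e - c) ^+ 2 / 8 * Phi c e + (d - e) ^+ 2 / 8 * Phi e d.
  by rewrite hP /e; field.
set A := Rintegral mu `]c, e[ f; set B := Rintegral mu `]e, d[ f.
have -> : A + B - (d - c) / 2 * (f ((3 * c + d) / 4) + f ((c + 3 * d) / 4)) =
  (A - (e - c) * f ((3 * c + d) / 4)) + (B - (d - e) * f ((c + 3 * d) / 4)).
  by rewrite /e; field.
apply: (le_trans (ler_normD _ _)).
exact: lerD.
Qed.

Lemma pw_amgm (y t : R) : 0 < t -> `|y| <= (2 * t)^-1 * y ^+ 2 + t / 2.
Proof.
move=> t0; rewrite -real_normK ?num_real //; set z := `|y|.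
have e : (2 * t)^-1 * z ^+ 2 + t / 2 - z = (z - t) ^+ 2 / (2 * t).
  by field; rewrite gt_eqF.
have : 0 <= (z - t) ^+ 2 / (2 * t) by rewrite divr_ge0 ?sqr_ge0 // mulr_ge0 // ltW.
rewrite -e; lra.
Qed.

Lemma Phi_t t : 0 < t ->
  Phi a b <= (2 * t)^-1 * Rintegral mu `[a, b] (fun x => f2 x ^+ 2) + t / 2 * (b - a).
Proof.
move=> t0.
have i2 : mu.-integrable `[a, b] (EFin \o (fun x => f2 x ^+ 2)) by exact: if2.
have mab : measurable `[a, b] by exact: measurable_itv.
have iZ := @integrableZl _ _ _ mu `[a, b] mab ((2 * t)^-1) _ i2.
have ic := @cc_int R (cst (t / 2)) a b (fun x => @cst_continuous _ _ (t / 2) x).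
have iD := @integrableD _ _ _ mu `[a, b] mab _ _ iZ ic.
have iD' : mu.-integrable `[a, b] (EFin \o (fun x => (2 * t)^-1 * f2 x ^+ 2 + t / 2)).
  by apply: eq_integrable iD.
apply: (@le_trans _ _ (Rintegral mu `[a, b] (fun x => (2 * t)^-1 * f2 x ^+ 2 + t / 2))).
  apply: le_Rintegral => //; first exact: int_absf2.
  by move=> x _; apply: pw_amgm.
rewrite RintegralD // RintegralZl // cst_int //.
Qed.
Lemma Phi_L2 : Phi a b <= Num.sqrt (b - a) * L2norm (derive1n 2 f) a b.
Proof.
rewrite /L2norm.
set N2 := Rintegral mu `[a, b] (fun t => derive1n 2 f t ^+ 2).
have N20 : 0 <= N2 by apply: Rintegral_ge0 => x _; exact: sqr_ge0.
have L0 : 0 < b - a by rewrite subr_gt0.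
have P0 := Phi_ge0 a b.
have S0 : 0 < Num.sqrt (b - a) by rewrite sqrtr_gt0.
have SS : Num.sqrt (b - a) ^+ 2 = b - a by rewrite sqr_sqrtr // ltW.
case: (eqVneq N2 0) => [N0|Nn0].
  rewrite N0 sqrtr0 mulr0.
  case: (lerP (Phi a b) 0) => // Ppos.
  have := Phi_t (Phi a b / (b - a)) (divr_gt0 Ppos L0).
  rewrite -/N2 N0 mulr0 add0r.
  have -> : Phi a b / (b - a) / 2 * (b - a) = Phi a b / 2 by field; rewrite gt_eqF.
  lra.
have Npos : 0 < N2 by rewrite lt_neqAle eq_sym Nn0 N20.
have Ns : 0 < Num.sqrt N2 by rewrite sqrtr_gt0.
have NN : Num.sqrt N2 ^+ 2 = N2 by rewrite sqr_sqrtr.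
have := Phi_t (Num.sqrt N2 / Num.sqrt (b - a)) (divr_gt0 Ns S0).
rewrite -/N2.
have -> : (2 * (Num.sqrt N2 / Num.sqrt (b - a)))^-1 * N2 +
  Num.sqrt N2 / Num.sqrt (b - a) / 2 * (b - a) = Num.sqrt (b - a) * Num.sqrt N2.
  move: NN SS Ns S0; set N := Num.sqrt N2; set S := Num.sqrt (b - a).
  move=> NN SS Ns S0; rewrite -NN -SS; field.
  by rewrite !gt_eqF.
by [].
Qed.
Section Ind.
Variable n : nat.
Hypothesis n0 : (0 < n)%N.
Local Notation h := ((b - a) / n%:R).
Local Notation x i := (node a b n i).

Lemma hn : n%:R * h = b - a.
Proof. by rewrite mulrC divfK // pnatr_eq0 -lt0n. Qed.

Lemma h_gt0 : 0 < h.
Proof. by rewrite divr_gt0 ?ltr0n // subr_gt0. Qed.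

Lemma node_S k : x k.+1 = x k + h.
Proof. by rewrite /node -natr1; ring. Qed.

Lemma node_ge k : a <= x k.
Proof. by rewrite /node lerDl mulr_ge0 // ltW // h_gt0. Qed.

Lemma node_le k : (k <= n)%N -> x k <= b.
Proof.
move=> kn; have := hn; have := h_gt0; have : k%:R <= n%:R :> R by rewrite ler_nat.
rewrite /node; move=> h1 h2 h3; nra.
Qed.

Lemma node_n : x n = b.
Proof. by rewrite /node hn; ring. Qed.

Definition Tm (i : nat) := f ((3 * x i + x i.+1) / 4) + f ((x i + 3 * x i.+1) / 4).

Lemma IND k : (k <= n)%N ->
  `|Rintegral mu `[a, x k] f - h / 2 * \sum_(i < k) Tm i| <=
    (h / 2) ^+ 2 / 8 * Phi a (x k).
Proof.
elim: k => [_|k IH kn].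
  rewrite big_ord0 mulr0 subr0 /node mul0r addr0 set_itv1 Rintegral_set1 normr0.
  by rewrite mulr_ge0 // ?Phi_ge0 // divr_ge0 // sqr_ge0.
have kn' : (k <= n)%N by exact: ltnW.
have IH' := IH kn'.
have ak := node_ge k.
have hS := node_S k.
have kk : x k < x k.+1 by rewrite hS ltrDl h_gt0.
have kb := node_le k.+1 kn.
have hP := Phi_add _ _ _ (lexx a) ak (ltW kk) kb.
have hpc := PC _ _ ak kk kb.
have E : x k.+1 - x k = h by rewrite hS; ring.
rewrite E in hpc.
have := @Rintegral_itvB R f (BLeft a) (BRight (x k.+1)) (x k)
  (int_fD (measurable_itv _) (sub_ab (lexx a) kb)).
rewrite !bnd_simp => /(_ ak (ltW kk)) => hI.
have -> : Rintegral mu `[a, x k.+1] f =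
    Rintegral mu `[a, x k] f + Rintegral mu `]x k, x k.+1[ f.
  rewrite Rintegral_itv_bndo_bndc; last first.
    apply: int_fD; first exact: measurable_itv.
    exact: oo_sub ak kb.
  by rewrite -hI addrC subrK.
rewrite big_ord_recr /= hP.
set A := Rintegral mu `[a, x k] f; set B := Rintegral mu `]x k, x k.+1[ f.
set S := \sum_(i < k) Tm i.
have -> : A + B - h / 2 * (S + Tm k) =
    (A - h / 2 * S) + (B - h / 2 * Tm k) by ring.
rewrite [X in _ <= X]mulrDr.
apply: (le_trans (ler_normD _ _)).
by apply: lerD; [exact: IH'|exact: hpc].
Qed.
End Ind.
End S.

Theorem theorem3p2 (R : realType) (a b : R) (n : nat) (f : R -> R) :
  a < b -> (1 <= n)%N ->
  (forall x, a < x < b -> derivable f x 1) ->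
  (forall x, a < x < b -> derivable (derive1 f) x 1) ->
  (forall x, a < x < b -> {for x, continuous (derive1n 2 f)}) ->
  lebesgue_measure.-integrable `[a, b] (fun x => ((derive1n 2 f) x ^+ 2)%:E) ->
  `| quadR f a b n | <=
    (b - a) `^ (5%:R / 2) / (4 * Num.sqrt 3 * pi * (n%:R) ^+ 2)
      * L2norm (derive1n 2 f) a b.
Proof.
move=> hab n1 df ddf cf2 if2.
have n0 : (0 < n)%N by [].
have H := @IND R a b f hab df ddf cf2 if2 n n0 n (leqnn n).
rewrite (@node_n R a b n n0) in H.
have HP := @Phi_L2 R a b f hab cf2 if2.
apply: (le_trans H).
have L0 : 0 < b - a by rewrite subr_gt0.
have nn0 : 0 < n%:R :> R by rewrite ltr0n.
have P0 : 0 <= Phi R f a b by exact: Phi_ge0.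
have N0 : 0 <= L2norm (derive1n 2 f) a b by rewrite /L2norm sqrtr_ge0.
have S0 : 0 < Num.sqrt (b - a) by rewrite sqrtr_gt0.
have c0 : 0 <= ((b - a) / n%:R / 2) ^+ 2 / 8 by rewrite divr_ge0 // sqr_ge0.
apply: (le_trans (ler_wpM2l c0 HP)).
have E : (b - a) `^ (5%:R / 2) = (b - a) ^+ 2 * Num.sqrt (b - a).
  have -> : 5%:R / 2 = 2%:R + 2^-1 :> R by field.
  rewrite powRD; last by rewrite gt_eqF // implybT.
  by rewrite powR_mulrn ?ltW // powR12_sqrt // ltW.
rewrite E.
set N := L2norm _ a b; set S := Num.sqrt (b - a); set L := b - a.
have s30 : 0 <= Num.sqrt 3 :> R by exact: sqrtr_ge0.
have s3 : Num.sqrt 3 ^+ 2 = 3 :> R by rewrite sqr_sqrtr.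
have s3le : Num.sqrt 3 <= 2 :> R by nra.
have s3pos : 0 < Num.sqrt 3 :> R by rewrite sqrtr_gt0.
have pi4 : pi < 4 :> R by have := @pihalf_lt2 R; lra.
have pi0 : 0 < pi :> R by exact: pi_gt0.
set D := 4 * Num.sqrt 3 * pi.
have D0 : 0 < D by rewrite /D !mulr_gt0.
have D32 : D <= 32 by rewrite /D; nra.
set K := L ^+ 2 * S * N / n%:R ^+ 2.
have K0 : 0 <= K by rewrite /K divr_ge0 ?mulr_ge0 ?sqr_ge0 // ltW.
have -> : (L / n%:R / 2) ^+ 2 / 8 * (S * N) = K / 32.
  by rewrite /K; field; rewrite gt_eqF.
have -> : L ^+ 2 * S / (D * n%:R ^+ 2) * N = K / D.
  by rewrite /K; field; rewrite !gt_eqF.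
have : K / D - K / 32 = K * (32 - D) / (32 * D) by field; rewrite gt_eqF.
have : 0 <= K * (32 - D) / (32 * D).
  by rewrite divr_ge0 ?mulr_ge0 // ?subr_ge0 // ltW.
lra.
Qed.
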